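(* Let $G$ be a small connected fair graph with $\chi(\mathcal{F}_{\mathrm{Top}_1}(G))\in\mathbb{Z}$. If a small computad $(G,\mathfrak{g}_2,s,t)$ presents the thin category $\overline{\mathcal{M}_1}\mathcal{F}_1(G)$, then $|\mathfrak{g}_2|\ge 1-\chi(\mathcal{F}_{\mathrm{Top}_1}(G))$.
   Context: Graphs and their categories. - A small graph $G$ consists of a set of objects, a set of arrows, and domain and codomain maps. - $\mathcal{F}_1(G)$ is the free category on $G$. - $\mathcal{L}_1\mathcal{F}_1(G)$ is the free groupoid on $G$. - $\overline{\mathcal{M}_1}\mathcal{F}_1(G)$ is the thin (preorder) reflection of $\mathcal{F}_1(G)$. Trees and weak trees. - A graph is connected if its free category is connected. - A tree is a connected graph $T$ with $\mathcal{L}_1\mathcal{F}_1(T)$ thin. - A weak tree is a connected graph $T$ with $\mathcal{F}_1(T)$ thin. - A maximal weak tree of $G$ is a subgraph that is a weak tree and is maximal among such. - $G$ is a fair graph if it has a maximal weak tree which is a tree. $\mathcal{F}_{\mathrm{Top}_1}(G)$ is the topological realization of $G$, and $\chi$ is the real Euler characteristic. A small computad $(G,\mathfrak{g}_2,s,t)$ is a set $\mathfrak{g}_2$ together with, for each $\alpha$, parallel morphisms $s(\alpha),t(\alpha)$ of $\mathcal{F}_1(G)$. It presents the quotient of $\mathcal{F}_1(G)$ by the congruence generated by $s(\alpha)=t(\alpha)$. *)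

(* Defs.v *)
From Stdlib Require Import List ZArith Relations ClassicalEpsilon.
Import ListNotations.
Open Scope Z_scope.

Record graph := Graph {
  Ob : Type;
  Ar : Type;
  dom : Ar -> Ob;
  cod : Ar -> Ob }.

(** Morphisms x -> y of the free category F1(G): composable lists of arrows
    (diagrammatic order; composition is ++, identities are nil). *)
Fixpoint valid_path (G : graph) (x y : Ob G) (p : list (Ar G)) : Prop :=
  match p with
  | [] => x = y
  | f :: q => dom G f = x /\ valid_path G (cod G f) y q
  end.

Definition hom_exists (G : graph) (x y : Ob G) : Prop :=
  exists p, valid_path G x y p.

Definition connected (G : graph) : Prop :=
  inhabited (Ob G) /\ forall x y : Ob G, clos_refl_sym_trans _ (hom_exists G) x y.

Definition free_cat_thin (G : graph) : Prop :=
  forall (x y : Ob G) (p q : list (Ar G)),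
    valid_path G x y p -> valid_path G x y q -> p = q.

(** Free groupoid L1F1(G): words in arrows (true) and formal inverses (false),
    modulo cancellation of adjacent inverse letters. *)
Definition letter (G : graph) := (Ar G * bool)%type.

Definition lsrc (G : graph) (l : letter G) : Ob G :=
  if snd l then dom G (fst l) else cod G (fst l).
Definition ltgt (G : graph) (l : letter G) : Ob G :=
  if snd l then cod G (fst l) else dom G (fst l).

Fixpoint valid_word (G : graph) (x y : Ob G) (w : list (letter G)) : Prop :=
  match w with
  | [] => x = y
  | l :: q => lsrc G l = x /\ valid_word G (ltgt G l) y q
  end.

Inductive cancel_step (G : graph) : list (letter G) -> list (letter G) -> Prop :=
  | cancel_intro : forall (w1 w2 : list (letter G)) (f : Ar G) (b : bool),
      cancel_step G (w1 ++ (f, b) :: (f, negb b) :: w2) (w1 ++ w2).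

Definition groupoid_eq (G : graph) := clos_refl_sym_trans _ (cancel_step G).

Definition free_groupoid_thin (G : graph) : Prop :=
  forall (x y : Ob G) (w1 w2 : list (letter G)),
    valid_word G x y w1 -> valid_word G x y w2 -> groupoid_eq G w1 w2.

Definition is_tree (G : graph) : Prop := connected G /\ free_groupoid_thin G.
Definition is_weak_tree (G : graph) : Prop := connected G /\ free_cat_thin G.

Record subgraph (G : graph) := Subgraph {
  sob : Ob G -> Prop;
  sar : Ar G -> Prop;
  sar_dom : forall f, sar f -> sob (dom G f);
  sar_cod : forall f, sar f -> sob (cod G f) }.

Definition sub_graph (G : graph) (S : subgraph G) : graph :=
  {| Ob := {x : Ob G | sob G S x};
     Ar := {f : Ar G | sar G S f};
     dom := fun f => exist _ (dom G (proj1_sig f)) (sar_dom G S _ (proj2_sig f));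
     cod := fun f => exist _ (cod G (proj1_sig f)) (sar_cod G S _ (proj2_sig f)) |}.

Definition subgraph_le (G : graph) (S T : subgraph G) : Prop :=
  (forall x, sob G S x -> sob G T x) /\ (forall f, sar G S f -> sar G T f).

Definition maximal_weak_tree (G : graph) (S : subgraph G) : Prop :=
  is_weak_tree (sub_graph G S) /\
  forall T : subgraph G, is_weak_tree (sub_graph G T) -> subgraph_le G S T ->
    subgraph_le G T S.

Definition fair (G : graph) : Prop :=
  exists S : subgraph G, maximal_weak_tree G S /\ is_tree (sub_graph G S).

(** Cellular homology of the topological realization F_Top1(G)
    (a 1-dimensional CW complex: 0-cells = objects, 1-cells = arrows). *)
Definition deltaZ {A : Type} (a b : A) : Z :=
  if excluded_middle_informative (a = b) then 1 else 0.

(** A cellular 1-chain: a finite formal integer combination of arrows. *)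
Definition chain (G : graph) := list (Ar G * Z).

Definition coeff (G : graph) (c : chain G) (f : Ar G) : Z :=
  fold_right (fun ek acc => snd ek * deltaZ (fst ek) f + acc) 0 c.

Definition boundary (G : graph) (c : chain G) (v : Ob G) : Z :=
  fold_right (fun ek acc =>
     snd ek * (deltaZ (cod G (fst ek)) v - deltaZ (dom G (fst ek)) v) + acc) 0 c.

Definition is_cycle (G : graph) (c : chain G) : Prop :=
  forall v, boundary G c v = 0.

Fixpoint sum_to (n : nat) (F : nat -> Z) : Z :=
  match n with O => 0 | S m => sum_to m F + F m end.

Definition independent (G : graph) (n : nat) (z : nat -> chain G) : Prop :=
  forall a : nat -> Z,
    (forall f, sum_to n (fun i => a i * coeff G (z i) f) = 0) ->
    forall i, (i < n)%nat -> a i = 0.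

(** H_1 = Z_1 (no 2-cells), a free abelian group; its rank is n. *)
Definition betti1 (G : graph) (n : nat) : Prop :=
  (exists z : nat -> chain G, (forall i, (i < n)%nat -> is_cycle G (z i)) /\
                              independent G n z) /\
  ~ (exists z : nat -> chain G, (forall i, (i < S n)%nat -> is_cycle G (z i)) /\
                                independent G (S n) z).

(** rank H_0 = number of path components of the realization. *)
Definition adjacent (G : graph) (x y : Ob G) : Prop :=
  exists f, dom G f = x /\ cod G f = y.

Definition betti0 (G : graph) (n : nat) : Prop :=
  exists v : nat -> Ob G,
    (forall i j, (i < n)%nat -> (j < n)%nat -> i <> j ->
       ~ clos_refl_sym_trans _ (adjacent G) (v i) (v j)) /\
    (forall x, exists i, (i < n)%nat /\ clos_refl_sym_trans _ (adjacent G) x (v i)).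

Definition euler_char_is (G : graph) (c : Z) : Prop :=
  exists b0 b1 : nat, betti0 G b0 /\ betti1 G b1 /\ c = Z.of_nat b0 - Z.of_nat b1.

Record computad (G : graph) := Computad {
  cells2 : Type;
  csrc : cells2 -> Ob G;
  ctgt : cells2 -> Ob G;
  s2 : cells2 -> list (Ar G);
  t2 : cells2 -> list (Ar G);
  s2_valid : forall a, valid_path G (csrc a) (ctgt a) (s2 a);
  t2_valid : forall a, valid_path G (csrc a) (ctgt a) (t2 a) }.

Inductive cstep (G : graph) (C : computad G) (x y : Ob G) :
    list (Ar G) -> list (Ar G) -> Prop :=
  | cstep_intro : forall (a : cells2 G C) (p q : list (Ar G)),
      valid_path G x (csrc G C a) p -> valid_path G (ctgt G C a) y q ->
      cstep G C x y (p ++ s2 G C a ++ q) (p ++ t2 G C a ++ q).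

Definition presented_eq (G : graph) (C : computad G) (x y : Ob G) :=
  clos_refl_sym_trans _ (cstep G C x y).

(** C presents the thin reflection of F1(G): the generated congruence
    identifies all parallel morphisms (it is always contained in parallelism). *)
Definition presents_thin_reflection (G : graph) (C : computad G) : Prop :=
  forall (x y : Ob G) (p q : list (Ar G)),
    valid_path G x y p -> valid_path G x y q -> presented_eq G C x y p q.

Definition card_ge (A : Type) (m : Z) : Prop :=
  forall n : nat, Z.of_nat n <= m ->
    exists h : {k : nat | (k < n)%nat} -> A,
      forall u v, h u = h v -> u = v.

(* Main.v *)
Require Import Defs.
From Stdlib Require Import ZArith List Lia Relations ClassicalEpsilon ProofIrrelevance Classical.
Import ListNotations.
Open Scope Z_scope.

Lemma deltaZ_eq {A} (a : A) : deltaZ a a = 1.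
Proof. unfold deltaZ; destruct (excluded_middle_informative (a = a)); congruence. Qed.
Lemma deltaZ_neq {A} (a b : A) : a <> b -> deltaZ a b = 0.
Proof. unfold deltaZ; destruct (excluded_middle_informative (a = b)); congruence. Qed.
Lemma deltaZ_sym {A} (a b : A) : deltaZ a b = deltaZ b a.
Proof. destruct (classic (a = b)) as [->|H]. reflexivity. rewrite !deltaZ_neq; auto. Qed.

Definition lsum {A} (l : list A) (F : A -> Z) : Z := fold_right (fun a acc => F a + acc) 0 l.

Lemma lsum_app {A} (l1 l2 : list A) F : lsum (l1 ++ l2) F = lsum l1 F + lsum l2 F.
Proof. induction l1; simpl; [lia|]. rewrite IHl1; lia. Qed.
Lemma lsum_ext {A} (l : list A) F G : (forall a, In a l -> F a = G a) -> lsum l F = lsum l G.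
Proof. induction l; simpl; intros H; auto. rewrite H, IHl; auto. Qed.
Lemma lsum_plus {A} (l : list A) F G : lsum l (fun a => F a + G a) = lsum l F + lsum l G.
Proof. induction l; simpl; [lia|]. rewrite IHl; lia. Qed.
Lemma lsum_minus {A} (l : list A) F G : lsum l (fun a => F a - G a) = lsum l F - lsum l G.
Proof. induction l; simpl; [lia|]. rewrite IHl; lia. Qed.
Lemma lsum_scal {A} (l : list A) k F : lsum l (fun a => k * F a) = k * lsum l F.
Proof. induction l; simpl; [lia|]. rewrite IHl; ring. Qed.
Lemma lsum_zero {A} (l : list A) F : (forall a, In a l -> F a = 0) -> lsum l F = 0.
Proof. induction l; simpl; intros H; auto. rewrite H, IHl; auto. Qed.
Lemma lsum_map {A B} (l : list A) (g : A -> B) F : lsum (map g l) F = lsum l (fun a => F (g a)).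
Proof. induction l; simpl; auto. rewrite IHl; auto. Qed.
Lemma lsum_swap {A B} (l1 : list A) (l2 : list B) F :
  lsum l1 (fun a => lsum l2 (fun b => F a b)) = lsum l2 (fun b => lsum l1 (fun a => F a b)).
Proof.
  induction l1; simpl.
  - symmetry; apply lsum_zero; auto.
  - rewrite IHl1. rewrite <- lsum_plus. reflexivity.
Qed.
Lemma lsum_delta {A} (V : list A) F x : NoDup V -> In x V -> lsum V (fun v => F v * deltaZ x v) = F x.
Proof.
  induction V as [|a V IH]; simpl; intros Hn Hi; [contradiction|].
  inversion Hn; subst.
  destruct Hi as [<-|Hi].
  - rewrite deltaZ_eq. rewrite lsum_zero; [lia|].
    intros b Hb. rewrite deltaZ_neq; [lia|]. intros ->; contradiction.
  - rewrite IH; auto. rewrite deltaZ_neq; [lia|]. intros ->; contradiction.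
Qed.
Lemma lsum_delta_notin {A} (V : list A) F x : ~ In x V -> lsum V (fun v => F v * deltaZ x v) = 0.
Proof.
  intros H; apply lsum_zero; intros b Hb. rewrite deltaZ_neq; [lia|]. intros ->; contradiction.
Qed.

Lemma nodup_ex {A} (l : list A) : exists l', NoDup l' /\ forall x, In x l <-> In x l'.
Proof.
  induction l as [|a l [l' [H1 H2]]].
  - exists []; split; [constructor| tauto].
  - destruct (classic (In a l')).
    + exists l'; split; auto. intro x; simpl; rewrite H2; split; [intros [<-|?]; auto | auto].
    + exists (a :: l'); split; [constructor; auto|]. intro x; simpl; rewrite H2; tauto.
Qed.

Lemma regroup {A B} (z : list B) (V : list A) (w : B -> A) (c : B -> Z) (F : A -> Z) :
  NoDup V -> (forall e, In e z -> In (w e) V) ->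
  lsum V (fun v => F v * lsum z (fun e => c e * deltaZ (w e) v)) = lsum z (fun e => c e * F (w e)).
Proof.
  intros Hn Hin.
  transitivity (lsum V (fun v => lsum z (fun e => c e * (F v * deltaZ (w e) v)))).
  { apply lsum_ext; intros v _. rewrite <- lsum_scal. apply lsum_ext; intros; ring. }
  rewrite lsum_swap. apply lsum_ext; intros e He.
  rewrite lsum_scal. rewrite lsum_delta; auto.
Qed.

Lemma sum_to_ext n F G : (forall i, (i < n)%nat -> F i = G i) -> sum_to n F = sum_to n G.
Proof. induction n; simpl; intros H; auto. rewrite IHn, H; auto. Qed.
Lemma sum_to_plus n F G : sum_to n (fun i => F i + G i) = sum_to n F + sum_to n G.
Proof. induction n; simpl; [lia|]. rewrite IHn; lia. Qed.
Lemma sum_to_scal n k F : sum_to n (fun i => k * F i) = k * sum_to n F.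
Proof. induction n; simpl; [lia|]. rewrite IHn; ring. Qed.
Lemma sum_to_zero n F : (forall i, (i < n)%nat -> F i = 0) -> sum_to n F = 0.
Proof. induction n; simpl; intros H; auto. rewrite IHn, H; auto. Qed.
Lemma sum_to_swap n m F :
  sum_to n (fun i => sum_to m (fun j => F i j)) = sum_to m (fun j => sum_to n (fun i => F i j)).
Proof.
  induction n; simpl.
  - symmetry; apply sum_to_zero; auto.
  - rewrite IHn. rewrite <- sum_to_plus. reflexivity.
Qed.
Lemma sum_to_ind n j F : (j < n)%nat -> sum_to n (fun i => (if Nat.eqb i j then 1 else 0) * F i) = F j.
Proof.
  induction n; simpl; intros H; [lia|].
  destruct (Nat.eqb n j) eqn:E.
  - apply Nat.eqb_eq in E; subst. rewrite sum_to_zero; [lia|].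
    intros i Hi. destruct (Nat.eqb i j) eqn:E2; [apply Nat.eqb_eq in E2; lia| lia].
  - apply Nat.eqb_neq in E. rewrite IHn; lia.
Qed.

Lemma lsum_cons {A} (a : A) l F : lsum (a :: l) F = F a + lsum l F.
Proof. reflexivity. Qed.

Lemma coeff_lsum G (c : chain G) f : coeff G c f = lsum c (fun e => snd e * deltaZ (fst e) f).
Proof. reflexivity. Qed.
Lemma boundary_lsum G (c : chain G) v :
  boundary G c v = lsum c (fun e => snd e * (deltaZ (cod G (fst e)) v - deltaZ (dom G (fst e)) v)).
Proof. reflexivity. Qed.

Definition scale G (k : Z) (c : chain G) : chain G := map (fun e => (fst e, k * snd e)) c.

Lemma coeff_app G (c1 c2 : chain G) f : coeff G (c1 ++ c2) f = coeff G c1 f + coeff G c2 f.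
Proof. rewrite !coeff_lsum; apply lsum_app. Qed.
Lemma boundary_app G (c1 c2 : chain G) f : boundary G (c1 ++ c2) f = boundary G c1 f + boundary G c2 f.
Proof. rewrite !boundary_lsum; apply lsum_app. Qed.
Lemma coeff_scale G k (c : chain G) f : coeff G (scale G k c) f = k * coeff G c f.
Proof. rewrite !coeff_lsum; unfold scale; rewrite lsum_map, <- lsum_scal; apply lsum_ext; intros; cbn [fst snd]; ring. Qed.
Lemma boundary_scale G k (c : chain G) f : boundary G (scale G k c) f = k * boundary G c f.
Proof. rewrite !boundary_lsum; unfold scale; rewrite lsum_map, <- lsum_scal; apply lsum_ext; intros; cbn [fst snd]; ring. Qed.

Definition pch G (p : list (Ar G)) : chain G := map (fun a => (a, 1)) p.
Definition cnt G (f : Ar G) (p : list (Ar G)) : Z := lsum p (fun h => deltaZ h f).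

Lemma coeff_pch G p f : coeff G (pch G p) f = cnt G f p.
Proof. rewrite coeff_lsum; unfold pch; rewrite lsum_map; apply lsum_ext; intros; cbn [fst snd]; ring. Qed.
Lemma cnt_app G f p q : cnt G f (p ++ q) = cnt G f p + cnt G f q.
Proof. apply lsum_app. Qed.
Lemma cnt_cons G f h p : cnt G f (h :: p) = deltaZ h f + cnt G f p.
Proof. reflexivity. Qed.
Lemma cnt_nonneg G f p : 0 <= cnt G f p.
Proof. induction p; [unfold cnt; simpl; lia|]. rewrite cnt_cons. unfold deltaZ; destruct excluded_middle_informative; lia. Qed.
Lemma cnt_notin G f p : ~ In f p -> cnt G f p = 0.
Proof. intros H; apply lsum_zero; intros a Ha; apply deltaZ_neq; intros ->; contradiction. Qed.
Lemma cnt_in G f p : In f p -> 1 <= cnt G f p.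
Proof.
  induction p; [intros []|]. rewrite cnt_cons. intros [->|H].
  - rewrite deltaZ_eq; pose proof (cnt_nonneg G f p); lia.
  - specialize (IHp H). unfold deltaZ; destruct excluded_middle_informative; lia.
Qed.

Lemma valid_path_app G x y p1 p2 :
  valid_path G x y (p1 ++ p2) <-> exists z, valid_path G x z p1 /\ valid_path G z y p2.
Proof.
  revert x; induction p1 as [|h p1 IH]; intros x; simpl.
  - split; [intros H; exists x; auto| intros [z [-> H]]; auto].
  - rewrite IH. split.
    + intros [Hd [z [H1 H2]]]; exists z; auto.
    + intros [z [[Hd H1] H2]]; split; eauto.
Qed.

Lemma boundary_pch G x y p v : valid_path G x y p -> boundary G (pch G p) v = deltaZ y v - deltaZ x v.
Proof.
  revert x; induction p as [|h p IH]; intros x.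
  - simpl. intros ->; unfold boundary; simpl; ring.
  - intros [Hd Hp]. specialize (IH _ Hp). rewrite boundary_lsum in *.
    unfold pch in *. cbn [map]. rewrite lsum_cons.
    rewrite IH. cbn [fst snd]. subst; ring.
Qed.

Definition diff G (p q : list (Ar G)) : chain G := pch G p ++ scale G (-1) (pch G q).
Lemma coeff_diff G p q f : coeff G (diff G p q) f = cnt G f p - cnt G f q.
Proof. unfold diff; rewrite coeff_app, coeff_scale, !coeff_pch; ring. Qed.
Lemma cycle_diff G x y p q : valid_path G x y p -> valid_path G x y q -> is_cycle G (diff G p q).
Proof.
  intros Hp Hq v. unfold diff; rewrite boundary_app, boundary_scale.
  rewrite (boundary_pch _ _ _ _ _ Hp), (boundary_pch _ _ _ _ _ Hq); ring.
Qed.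

Definition Dj G (C : computad G) (L : list (cells2 G C)) (j : nat) : chain G :=
  match nth_error L j with Some a => diff G (s2 G C a) (t2 G C a) | None => [] end.
Definition inspan G C L (c : chain G) : Prop :=
  exists a : nat -> Z, forall f, coeff G c f = sum_to (length L) (fun j => a j * coeff G (Dj G C L j) f).

Lemma inspan_ext G C L c c' : (forall f, coeff G c f = coeff G c' f) -> inspan G C L c -> inspan G C L c'.
Proof. intros H [a Ha]; exists a; intros f; rewrite <- H; auto. Qed.
Lemma inspan_zero G C L c : (forall f, coeff G c f = 0) -> inspan G C L c.
Proof. intros H; exists (fun _ => 0); intros f; rewrite H; symmetry; apply sum_to_zero; intros; lia. Qed.
Lemma inspan_app G C L c1 c2 : inspan G C L c1 -> inspan G C L c2 -> inspan G C L (c1 ++ c2).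
Proof.
  intros [a Ha] [b Hb]; exists (fun j => a j + b j); intros f.
  rewrite coeff_app, Ha, Hb, <- sum_to_plus; apply sum_to_ext; intros; ring.
Qed.
Lemma inspan_scale G C L k c : inspan G C L c -> inspan G C L (scale G k c).
Proof.
  intros [a Ha]; exists (fun j => k * a j); intros f.
  rewrite coeff_scale, Ha, <- sum_to_scal; apply sum_to_ext; intros; ring.
Qed.
Lemma inspan_D G C L j : (j < length L)%nat -> inspan G C L (Dj G C L j).
Proof.
  intros Hj; exists (fun i => if Nat.eqb i j then 1 else 0); intros f.
  rewrite sum_to_ind; auto.
Qed.

Lemma presented_inspan G C L x y p q : (forall a, In a L) ->
  presented_eq G C x y p q -> inspan G C L (diff G p q).
Proof.
  intros Hcov H; induction H as [p q Hs| p | p q _ IH | p q r _ IH1 _ IH2].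
  - destruct Hs as [a p0 q0 H1 H2].
    destruct (In_nth_error L a (Hcov a)) as [j Hj].
    assert (Hl : (j < length L)%nat) by (apply nth_error_Some; congruence).
    apply (inspan_ext _ _ _ (Dj G C L j)); [|apply inspan_D; auto].
    intros f; unfold Dj; rewrite Hj, !coeff_diff, !cnt_app; ring.
  - apply inspan_zero; intros f; rewrite coeff_diff; ring.
  - apply (inspan_ext _ _ _ (scale G (-1) (diff G p q))); [|apply inspan_scale; auto].
    intros f; rewrite coeff_scale, !coeff_diff; ring.
  - apply (inspan_ext _ _ _ (diff G p q ++ diff G q r)); [|apply inspan_app; auto].
    intros f; rewrite coeff_app, !coeff_diff; ring.
Qed.

Lemma sub_eq {A} (P : A -> Prop) (x y : {a | P a}) : proj1_sig x = proj1_sig y -> x = y.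
Proof. destruct x, y; simpl; intros ->; f_equal; apply proof_irrelevance. Qed.

Lemma vp_sub_proj G S x y p : valid_path (sub_graph G S) x y p ->
  valid_path G (proj1_sig x) (proj1_sig y) (map (@proj1_sig _ _) p).
Proof.
  revert x; induction p as [|h p IH]; intros x; simpl.
  - intros ->; reflexivity.
  - intros [Hd Hp]. subst x. simpl. split; auto. apply (IH _ Hp).
Qed.

Lemma vp_sub_lift G S x y p (Hx : sob G S x) (Hy : sob G S y) :
  Forall (sar G S) p -> valid_path G x y p ->
  exists p', map (@proj1_sig _ _) p' = p /\
    valid_path (sub_graph G S) (exist _ x Hx) (exist _ y Hy) p'.
Proof.
  intros HF; revert x Hx; induction HF as [|h p Hh HF IH]; intros x Hx; simpl.
  - intros ->. exists []; split; auto. simpl. apply sub_eq; reflexivity.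
  - intros [Hd Hp]. destruct (IH _ (sar_cod G S h Hh) Hp) as [p' [E V]].
    exists (exist _ h Hh :: p'); split; [simpl; congruence|].
    simpl. split; [apply sub_eq; simpl; auto| exact V].
Qed.

Lemma vp_end_in G S x y p : Forall (sar G S) p -> valid_path G x y p -> sob G S x -> sob G S y.
Proof.
  intros HF; revert x; induction HF as [|h p Hh HF IH]; intros x; simpl.
  - intros ->; auto.
  - intros [Hd Hp] _. apply (IH _ Hp), sar_cod, Hh.
Qed.

Lemma lsum_nil {A} (F : A -> Z) : lsum [] F = 0.
Proof. reflexivity. Qed.

Definition thinS G (S : subgraph G) : Prop :=
  forall x y p q, Forall (sar G S) p -> Forall (sar G S) q ->
    valid_path G x y p -> valid_path G x y q -> p = q.

Lemma map_proj_inj {A} (P : A -> Prop) (p q : list {a | P a}) :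
  map (@proj1_sig _ _) p = map (@proj1_sig _ _) q -> p = q.
Proof.
  revert q; induction p as [|a p IH]; intros [|b q]; simpl; intros H; try discriminate; auto.
  injection H; intros H1 H2. f_equal; [apply sub_eq; auto| apply IH; auto].
Qed.

Lemma Forall_proj G S (p : list (Ar (sub_graph G S))) : Forall (sar G S) (map (@proj1_sig _ _) p).
Proof. induction p; simpl; constructor; auto. exact (proj2_sig a). Qed.

Lemma thin_to_S G S : free_cat_thin (sub_graph G S) -> thinS G S.
Proof.
  intros Hth x y p q Hp Hq Vp Vq.
  destruct (classic (sob G S x)) as [Hx|Hx].
  - pose proof (vp_end_in _ _ _ _ _ Hp Vp Hx) as Hy.
    destruct (vp_sub_lift G S x y p Hx Hy Hp Vp) as [p' [Ep Vp']].
    destruct (vp_sub_lift G S x y q Hx Hy Hq Vq) as [q' [Eq Vq']].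
    rewrite <- Ep, <- Eq. f_equal. apply (Hth _ _ _ _ Vp' Vq').
  - destruct p as [|h p]; [destruct q as [|h' q]; auto|].
    + exfalso. destruct Vq as [Hd _]. inversion Hq; subst. apply Hx, sar_dom; auto.
    + exfalso. destruct Vp as [Hd _]. inversion Hp; subst. apply Hx, sar_dom; auto.
Qed.

Lemma S_to_thin G S : thinS G S -> free_cat_thin (sub_graph G S).
Proof.
  intros Hth x y p q Vp Vq. apply map_proj_inj.
  apply (Hth (proj1_sig x) (proj1_sig y)); try apply Forall_proj; apply vp_sub_proj; auto.
Qed.

Lemma hom_clos (H1 H2 : graph) (fo : Ob H1 -> Ob H2) (fa : Ar H1 -> Ar H2) :
  (forall h, dom H2 (fa h) = fo (dom H1 h)) -> (forall h, cod H2 (fa h) = fo (cod H1 h)) ->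
  forall x y, clos_refl_sym_trans _ (hom_exists H1) x y ->
    clos_refl_sym_trans _ (hom_exists H2) (fo x) (fo y).
Proof.
  intros Hd Hc x y H; induction H as [x y [p Hp]| | |].
  - apply rst_step. exists (map fa p). revert x Hp; induction p as [|h p IH]; intros x; simpl.
    + intros ->; auto.
    + intros [E Hp]; split; [rewrite Hd; congruence| rewrite Hc; apply IH; auto].
  - apply rst_refl.
  - apply rst_sym; auto.
  - eapply rst_trans; eauto.
Qed.

Definition incl_ob G (S S' : subgraph G) (Hle : subgraph_le G S S') (x : Ob (sub_graph G S)) : Ob (sub_graph G S') :=
  exist _ (proj1_sig x) (proj1 Hle _ (proj2_sig x)).
Definition incl_ar G (S S' : subgraph G) (Hle : subgraph_le G S S') (h : Ar (sub_graph G S)) : Ar (sub_graph G S') :=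
  exist _ (proj1_sig h) (proj2 Hle _ (proj2_sig h)).

Lemma incl_conn G S S' (Hle : subgraph_le G S S') x y :
  clos_refl_sym_trans _ (hom_exists (sub_graph G S)) x y ->
  clos_refl_sym_trans _ (hom_exists (sub_graph G S')) (incl_ob G S S' Hle x) (incl_ob G S S' Hle y).
Proof.
  apply hom_clos with (fa := incl_ar G S S' Hle); intros h; apply sub_eq; reflexivity.
Qed.

Lemma valid_word_app H x y w1 w2 :
  valid_word H x y (w1 ++ w2) <-> exists z, valid_word H x z w1 /\ valid_word H z y w2.
Proof.
  revert x; induction w1 as [|l w1 IH]; intros x; simpl.
  - split; [intros H0; exists x; auto| intros [z [-> H0]]; auto].
  - rewrite IH. split.
    + intros [Hd [z [H1 H2]]]; exists z; auto.
    + intros [z [[Hd H1] H2]]; split; eauto.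
Qed.

Lemma conn_word H x y : clos_refl_sym_trans _ (hom_exists H) x y -> exists w, valid_word H x y w.
Proof.
  intros C; induction C as [x y [p Hp]| x | x y _ [w Hw] | x y z _ [w1 H1] _ [w2 H2]].
  - exists (map (fun a => (a, true)) p). revert x Hp; induction p as [|h p IH]; intros x; simpl; auto.
    intros [E Hp]; split; auto.
  - exists []; reflexivity.
  - exists (rev (map (fun l => (fst l, negb (snd l))) w)).
    revert x Hw; induction w as [|l w IH]; intros x; simpl.
    + intros ->; reflexivity.
    + intros [Hs Hw]. apply valid_word_app. exists (ltgt H l). split; [apply IH; auto|].
      simpl. destruct l as [a [|]]; unfold lsrc, ltgt in *; simpl in *; auto.
  - exists (w1 ++ w2). apply valid_word_app; eauto.
Qed.

Definition cntw G T (g : Ar G) (w : list (letter (sub_graph G T))) : Z :=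
  lsum w (fun l => (if snd l then 1 else -1) * deltaZ (proj1_sig (fst l)) g).

Lemma cntw_geq G T g w1 w2 : groupoid_eq (sub_graph G T) w1 w2 -> cntw G T g w1 = cntw G T g w2.
Proof.
  intros H; induction H as [w1 w2 Hs| | |]; auto; try congruence.
  destruct Hs as [u1 u2 f b]. unfold cntw; rewrite !lsum_app, !lsum_cons.
  destruct b; cbn [snd fst negb]; ring.
Qed.

Lemma potential G T (g : Ar G) : is_tree (sub_graph G T) ->
  exists phi : Ob G -> Z, forall h, sar G T h -> phi (cod G h) - phi (dom G h) = deltaZ h g.
Proof.
  intros [[[o] Hconn] Hthin].
  assert (Hw : forall v : Ob (sub_graph G T), exists w, valid_word _ o v w).
  { intro v. apply conn_word. apply Hconn. }
  set (pick := fun v => proj1_sig (constructive_indefinite_description _ (Hw v))).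
  assert (Hpick : forall v, valid_word _ o v (pick v)).
  { intro v. exact (proj2_sig (constructive_indefinite_description _ (Hw v))). }
  exists (fun x => match excluded_middle_informative (sob G T x) with
                   | left Hx => cntw G T g (pick (exist _ x Hx)) | right _ => 0 end).
  intros h Hh.
  destruct (excluded_middle_informative (sob G T (cod G h))) as [Hc|Hc];
    [|exfalso; apply Hc, (sar_cod G T h Hh)].
  destruct (excluded_middle_informative (sob G T (dom G h))) as [Hd|Hd];
    [|exfalso; apply Hd, (sar_dom G T h Hh)].
  set (h' := exist (sar G T) h Hh : Ar (sub_graph G T)).
  assert (Hv : valid_word _ o (exist _ (cod G h) Hc) (pick (exist _ (dom G h) Hd) ++ [(h', true)])).
  { apply valid_word_app. exists (exist _ (dom G h) Hd). split; auto. simpl.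
    split; apply sub_eq; reflexivity. }
  pose proof (Hthin _ _ _ _ (Hpick _) Hv) as Heq.
  apply (cntw_geq G T g) in Heq. rewrite Heq. unfold cntw; rewrite lsum_app, lsum_cons. unfold h'; cbn [fst snd proj1_sig]. rewrite lsum_nil. ring.
Qed.

Lemma tree_no_cycle G T z : is_tree (sub_graph G T) -> is_cycle G z ->
  (forall h, coeff G z h <> 0 -> sar G T h) -> forall g, coeff G z g = 0.
Proof.
  intros Htree Hcyc Hsupp g.
  destruct (potential G T g Htree) as [phi Hphi].
  destruct (nodup_ex (map fst z)) as [H [HnH HiH]].
  destruct (nodup_ex (flat_map (fun e => [dom G (fst e); cod G (fst e)]) z)) as [V [HnV HiV]].
  destruct (classic (In g H)) as [Hg|Hg].
  2:{ apply NNPP; intro Hz. apply Hg, HiH. rewrite coeff_lsum in Hz.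
      clear -Hz. induction z as [|e z IH]; simpl in *; [lia|].
      destruct (classic (fst e = g)); [auto|]. right. apply IH. rewrite deltaZ_neq in Hz; auto; lia. }
  set (Phi := fun h => phi (cod G h) - phi (dom G h)).
  assert (E1 : coeff G z g = lsum H (fun h => Phi h * coeff G z h)).
  { rewrite <- (lsum_delta H (coeff G z) g HnH Hg). apply lsum_ext; intros h Hh.
    destruct (classic (coeff G z h = 0)) as [E|E]; [rewrite E; ring|].
    unfold Phi; rewrite Hphi; auto. rewrite deltaZ_sym; ring. }
  assert (E2 : lsum H (fun h => Phi h * coeff G z h) = lsum z (fun e => snd e * Phi (fst e))).
  { apply (regroup z H fst snd Phi HnH). intros e He. apply HiH, in_map; auto. }
  assert (E3 : lsum V (fun v => phi v * boundary G z v) = lsum z (fun e => snd e * Phi (fst e))).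
  { transitivity (lsum V (fun v => phi v * lsum z (fun e => snd e * deltaZ (cod G (fst e)) v))
                 - lsum V (fun v => phi v * lsum z (fun e => snd e * deltaZ (dom G (fst e)) v))).
    { rewrite <- lsum_minus. apply lsum_ext; intros v _. rewrite boundary_lsum.
      rewrite <- Z.mul_sub_distr_l, <- lsum_minus. f_equal. apply lsum_ext; intros; ring. }
    rewrite (regroup z V (fun e => cod G (fst e)) snd phi HnV).
    2:{ intros e He. apply HiV, in_flat_map. exists e; simpl; auto. }
    rewrite (regroup z V (fun e => dom G (fst e)) snd phi HnV).
    2:{ intros e He. apply HiV, in_flat_map. exists e; simpl; auto. }
    rewrite <- lsum_minus. apply lsum_ext; intros; unfold Phi; ring. }
  assert (E4 : lsum V (fun v => phi v * boundary G z v) = 0).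
  { apply lsum_zero; intros v _. rewrite Hcyc; ring. }
  lia.
Qed.

Lemma first_split {A} (f : A) p : In f p -> exists p1 p2, p = p1 ++ f :: p2 /\ ~ In f p1.
Proof.
  induction p as [|a p IH]; [intros []|]. intros Hi. destruct (classic (a = f)) as [->|Ha].
  - exists [], p; split; auto.
  - destruct Hi as [->|Hi]; [congruence|]. destruct (IH Hi) as [p1 [p2 [-> Hn]]].
    exists (a :: p1), p2; split; auto. simpl; intros [->|H]; auto.
Qed.

Lemma Forall_notin G T f p : Forall (fun h => sar G T h \/ h = f) p -> ~ In f p -> Forall (sar G T) p.
Proof.
  induction 1 as [|h p [Hh| ->] _ IH]; simpl; intros Hn; constructor; auto; exfalso; auto.
Qed.

Lemma fcount_base G T f x y p q : thinS G T ->
  Forall (fun h => sar G T h \/ h = f) p -> Forall (fun h => sar G T h \/ h = f) q ->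
  valid_path G x y p -> valid_path G x y q -> cnt G f p = cnt G f q -> ~ In f p -> p = q.
Proof.
  intros Hth Hp Hq Vp Vq Hc Hn.
  assert (Hnq : ~ In f q).
  { intros Hi. pose proof (cnt_in G f q Hi). rewrite cnt_notin in Hc; auto. lia. }
  apply (Hth x y); auto; eapply Forall_notin; eauto.
Qed.

Lemma fcount_thin G T f : thinS G T -> forall n x y p q, (length p <= n)%nat ->
  Forall (fun h => sar G T h \/ h = f) p -> Forall (fun h => sar G T h \/ h = f) q ->
  valid_path G x y p -> valid_path G x y q -> cnt G f p = cnt G f q -> p = q.
Proof.
  intros Hth n; induction n as [|n IH]; intros x y p q Hl Hp Hq Vp Vq Hc;
    (destruct (classic (In f p)) as [Hi|Hi]; [|eapply fcount_base; eauto]).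
  - destruct p; simpl in *; [contradiction| lia].
  - assert (Hiq : In f q).
    { apply NNPP; intro Hn. rewrite (cnt_notin G f q Hn) in Hc. pose proof (cnt_in G f p Hi); lia. }
    destruct (first_split f p Hi) as [p1 [p2 [-> Hn1]]].
    destruct (first_split f q Hiq) as [q1 [q2 [-> Hn2]]].
    apply Forall_app in Hp; destruct Hp as [Hp1 Hp2]; inversion Hp2; subst.
    apply Forall_app in Hq; destruct Hq as [Hq1 Hq2]; inversion Hq2; subst.
    apply valid_path_app in Vp; destruct Vp as [z1 [Vp1 [E1 Vp2]]].
    apply valid_path_app in Vq; destruct Vq as [z2 [Vq1 [E2 Vq2]]].
    subst z1 z2.
    assert (p1 = q1) as <-.
    { apply (Hth x (dom G f)); auto; eapply Forall_notin; eauto. }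
    f_equal. f_equal.
    rewrite !cnt_app, !cnt_cons, !deltaZ_eq in Hc.
    rewrite length_app in Hl; simpl in Hl.
    apply (IH (cod G f) y); auto; lia.
Qed.

Lemma crossing G (P : Ob G -> Prop) x y : clos_refl_sym_trans _ (hom_exists G) x y ->
  ~ (P x <-> P y) -> exists f, ~ (P (dom G f) <-> P (cod G f)).
Proof.
  intros C; induction C as [x y [p Hp]| x | x y _ IH | x y z _ IH1 _ IH2]; intros Hn.
  - revert x Hp Hn; induction p as [|h p IHp]; intros x; simpl.
    + intros ->; tauto.
    + intros [Hd Hp] Hn. destruct (classic (P (dom G h) <-> P (cod G h))) as [E|E]; [|eauto].
      apply (IHp _ Hp). subst x; tauto.
  - tauto.
  - apply IH; tauto.
  - destruct (classic (P x <-> P y)); [apply IH2; tauto| apply IH1; tauto].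
Qed.

(* extension of a maximal weak tree by a pendant arrow is impossible *)
Lemma ext_wt G T f w : maximal_weak_tree G T -> ~ sob G T w ->
  (sob G T (dom G f) /\ cod G f = w) \/ (dom G f = w /\ sob G T (cod G f)) ->
  (forall x y p q, Forall (fun h => sar G T h \/ h = f) p -> Forall (fun h => sar G T h \/ h = f) q ->
     valid_path G x y p -> valid_path G x y q -> cnt G f p = cnt G f q) -> False.
Proof.
  intros [[[[o] Hconn] Hth] Hmax] Hw Hends Hcnt.
  assert (Hsd : forall h, sar G T h \/ h = f -> sob G T (dom G h) \/ dom G h = w).
  { intros h [Hh| ->]; [left; apply sar_dom; auto| destruct Hends as [[? ?]|[? ?]]; auto]. }
  assert (Hsc : forall h, sar G T h \/ h = f -> sob G T (cod G h) \/ cod G h = w).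
  { intros h [Hh| ->]; [left; apply sar_cod; auto| destruct Hends as [[? ?]|[? ?]]; auto]. }
  pose (T' := Subgraph G (fun x => sob G T x \/ x = w) (fun h => sar G T h \/ h = f) Hsd Hsc).
  assert (Hle : subgraph_le G T T') by (split; simpl; auto).
  assert (Hwt : is_weak_tree (sub_graph G T')).
  { split; [split|].
    - constructor. exact (incl_ob G T T' Hle o).
    - set (b := incl_ob G T T' Hle o).
      assert (Hb : forall x : Ob (sub_graph G T'), clos_refl_sym_trans _ (hom_exists _) x b).
      { assert (HT : forall u (Hu : sob G T u) (x : Ob (sub_graph G T')), proj1_sig x = u ->
                     clos_refl_sym_trans _ (hom_exists _) x b).
        { intros u Hu x Ex. replace x with (incl_ob G T T' Hle (exist _ u Hu)) by (apply sub_eq; simpl; auto).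
          apply incl_conn, Hconn. }
        intros x. destruct (proj2_sig x) as [Hx|Hx]; [eapply HT; eauto|].
        set (f' := exist _ f (or_intror eq_refl) : Ar (sub_graph G T')).
        destruct Hends as [[Hd Hc]|[Hd Hc]].
        - eapply rst_trans; [apply rst_sym, rst_step|].
          + exists [f']. simpl. split; [reflexivity|]. apply sub_eq; simpl. etransitivity; [exact Hc| symmetry; exact Hx].
          + eapply HT; [exact Hd| reflexivity].
        - eapply rst_trans; [apply rst_step|].
          + exists [f']. simpl. split; [apply sub_eq; simpl; etransitivity; [exact Hd| symmetry; exact Hx]| reflexivity].
          + eapply HT; [exact Hc| reflexivity]. }
      intros x y. eapply rst_trans; [apply Hb| apply rst_sym, Hb].
    - apply S_to_thin. intros x y p q Hp Hq Vp Vq.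
      apply (fcount_thin G T f (thin_to_S G T Hth) (length p) x y p q); auto. eapply Hcnt; eauto.
  }
  destruct (Hmax T' Hwt Hle) as [Hob _].
  apply Hw, Hob. simpl. auto.
Qed.

Lemma caseA_nil G T f x y p : Forall (fun h => sar G T h \/ h = f) p -> valid_path G x y p ->
  ~ sob G T x -> sob G T (dom G f) -> x = y /\ p = [].
Proof.
  destruct p as [|h p]; simpl; [auto|]. intros HF [Hd _] Hx Hf. inversion HF as [|? ? [Hh| ->]]; subst.
  - exfalso; apply Hx, sar_dom; auto.
  - contradiction.
Qed.

Lemma caseA_cnt G T f x y p : Forall (fun h => sar G T h \/ h = f) p -> valid_path G x y p ->
  sob G T (dom G f) -> ~ sob G T (cod G f) ->
  (sob G T y -> cnt G f p = 0) /\ (~ sob G T y -> sob G T x -> cnt G f p = 1).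
Proof.
  intros HF; revert x; induction HF as [|h p Hh HF IH]; intros x Vp Hd Hc.
  - simpl in Vp; subst; split; [reflexivity| tauto].
  - destruct Vp as [Ex Vp]. rewrite cnt_cons.
    destruct (classic (h = f)) as [->|Hne].
    + destruct (caseA_nil G T f _ _ _ HF Vp Hc Hd) as [<- ->].
      rewrite deltaZ_eq. split; [tauto| reflexivity].
    + rewrite deltaZ_neq; auto. destruct Hh as [Hh|]; [|congruence].
      destruct (IH _ Vp Hd Hc) as [I1 I2]. split; [auto|]. intros Hy _. rewrite I2; auto. apply sar_cod; auto.
Qed.

Lemma caseB_nil G T f x y p : Forall (fun h => sar G T h \/ h = f) p -> valid_path G x y p ->
  ~ sob G T y -> sob G T (cod G f) -> x = y /\ p = [].
Proof.
  intros HF; revert x; induction HF as [|h p Hh HF IH]; intros x Vp Hy Hc.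
  - simpl in Vp; auto.
  - destruct Vp as [Ex Vp]. destruct (IH _ Vp Hy Hc) as [E ->].
    exfalso. destruct Hh as [Hh| ->]; [apply Hy; rewrite <- E; apply sar_cod; auto| apply Hy; rewrite <- E; auto].
Qed.

Lemma caseB_cnt G T f x y p : Forall (fun h => sar G T h \/ h = f) p -> valid_path G x y p ->
  ~ sob G T (dom G f) -> sob G T (cod G f) ->
  (sob G T x -> cnt G f p = 0) /\ (~ sob G T x -> sob G T y -> cnt G f p = 1).
Proof.
  intros HF; revert x; induction HF as [|h p Hh HF IH]; intros x Vp Hd Hc.
  - simpl in Vp; subst; split; [reflexivity| tauto].
  - destruct Vp as [Ex Vp]. rewrite cnt_cons. subst x.
    destruct (IH _ Vp Hd Hc) as [I1 I2].
    destruct (classic (h = f)) as [->|Hne].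
    + rewrite deltaZ_eq. split; [tauto|]. intros _ _. rewrite I1; auto.
    + rewrite deltaZ_neq; auto. destruct Hh as [Hh|]; [|congruence].
      split; [intros _; rewrite I1; auto; apply sar_cod; auto| intros Hx; exfalso; apply Hx, sar_dom; auto].
Qed.

Lemma spanning G T : connected G -> maximal_weak_tree G T -> forall x, sob G T x.
Proof.
  intros [_ HG] Hmt x. apply NNPP; intro Hx.
  destruct Hmt as [[[[o] Hc] Hth] Hmax] eqn:Em.
  destruct (crossing G (sob G T) _ _ (HG (proj1_sig o) x)) as [f Hf].
  { intros H; apply Hx; apply H; exact (proj2_sig o). }
  pose proof (thin_to_S G T Hth) as HthS.
  destruct (classic (sob G T (dom G f))) as [Hd|Hd].
  - assert (Hcf : ~ sob G T (cod G f)) by tauto.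
    apply (ext_wt G T f (cod G f) Hmt Hcf (or_introl (conj Hd eq_refl))).
    intros x0 y p q Hp Hq Vp Vq.
    destruct (caseA_cnt G T f _ _ _ Hp Vp Hd Hcf) as [P1 P2].
    destruct (caseA_cnt G T f _ _ _ Hq Vq Hd Hcf) as [Q1 Q2].
    destruct (classic (sob G T y)) as [Hy|Hy]; [rewrite P1, Q1; auto|].
    destruct (classic (sob G T x0)) as [Hx0|Hx0]; [rewrite P2, Q2; auto|].
    destruct (caseA_nil G T f _ _ _ Hp Vp Hx0 Hd) as [_ ->].
    destruct (caseA_nil G T f _ _ _ Hq Vq Hx0 Hd) as [_ ->]. reflexivity.
  - assert (Hcf : sob G T (cod G f)) by tauto.
    apply (ext_wt G T f (dom G f) Hmt Hd (or_intror (conj eq_refl Hcf))).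
    intros x0 y p q Hp Hq Vp Vq.
    destruct (caseB_cnt G T f _ _ _ Hp Vp Hd Hcf) as [P1 P2].
    destruct (caseB_cnt G T f _ _ _ Hq Vq Hd Hcf) as [Q1 Q2].
    destruct (classic (sob G T x0)) as [Hx0|Hx0]; [rewrite P1, Q1; auto|].
    destruct (classic (sob G T y)) as [Hy|Hy]; [rewrite P2, Q2; auto|].
    destruct (caseB_nil G T f _ _ _ Hp Vp Hy Hcf) as [_ ->].
    destruct (caseB_nil G T f _ _ _ Hq Vq Hy Hcf) as [_ ->]. reflexivity.
Qed.

Lemma coeff_nz_in G (z : chain G) h : coeff G z h <> 0 -> In h (map fst z).
Proof.
  rewrite coeff_lsum. induction z as [|e z IH]; simpl; [lia|].
  intros Hz. destruct (classic (fst e = h)); [auto|]. right. apply IH.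
  rewrite deltaZ_neq in Hz; auto; lia.
Qed.

Lemma ef_exists G C L T f : (forall a, In a L) -> presents_thin_reflection G C ->
  maximal_weak_tree G T -> (forall x, sob G T x) -> ~ sar G T f ->
  exists v, inspan G C L v /\ is_cycle G v /\ coeff G v f <> 0 /\
            (forall g, coeff G v g <> 0 -> sar G T g \/ g = f).
Proof.
  intros Hcov Hpres [[[Hinh Hconn] Hth] Hmax] Hsp Hf.
  pose (Tf := Subgraph G (sob G T) (fun h => sar G T h \/ h = f)
                (fun h _ => Hsp (dom G h)) (fun h _ => Hsp (cod G h))).
  assert (Hle : subgraph_le G T Tf) by (split; simpl; auto).
  assert (Hnt : ~ thinS G Tf).
  { intros HS. apply S_to_thin in HS.
    assert (Hwt : is_weak_tree (sub_graph G Tf)).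
    { split; [split|exact HS].
      - destruct Hinh as [o]; constructor; exact (incl_ob G T Tf Hle o).
      - intros x y.
        replace x with (incl_ob G T Tf Hle (exist _ (proj1_sig x) (proj2_sig x))) by (apply sub_eq; reflexivity).
        replace y with (incl_ob G T Tf Hle (exist _ (proj1_sig y) (proj2_sig y))) by (apply sub_eq; reflexivity).
        apply incl_conn, Hconn. }
    destruct (Hmax Tf Hwt Hle) as [_ H]. apply Hf, H. simpl; auto. }
  destruct (classic (exists x y p q, Forall (sar G Tf) p /\ Forall (sar G Tf) q /\
             valid_path G x y p /\ valid_path G x y q /\ p <> q))
    as [[x [y [p [q [Hp [Hq [Vp [Vq Hne]]]]]]]] | Hno].
  2:{ exfalso; apply Hnt; intros x y p q Hp Hq Vp Vq; apply NNPP; intro; apply Hno; eauto 10. }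
  simpl in Hp, Hq.
  assert (Hc : cnt G f p <> cnt G f q).
  { intros E. apply Hne. apply (fcount_thin G T f (thin_to_S G T Hth) (length p) x y); auto. }
  exists (diff G p q). split; [|split; [|split]].
  - apply presented_inspan with x y; auto.
  - eapply cycle_diff; eauto.
  - rewrite coeff_diff; lia.
  - intros g Hg. rewrite coeff_diff in Hg.
    destruct (classic (In g p)) as [Hi|Hi].
    + rewrite Forall_forall in Hp; auto.
    + destruct (classic (In g q)) as [Hi'|Hi'].
      * rewrite Forall_forall in Hq; auto.
      * rewrite !cnt_notin in Hg; auto; lia.
Qed.

Lemma reduce G C L T : (forall a, In a L) -> presents_thin_reflection G C ->
  maximal_weak_tree G T -> is_tree (sub_graph G T) -> (forall x, sob G T x) ->
  forall l z, is_cycle G z -> (forall h, coeff G z h <> 0 -> sar G T h \/ In h l) ->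
  exists N, N <> 0 /\ inspan G C L (scale G N z).
Proof.
  intros Hcov Hpres Hmax Htree Hsp l; induction l as [|f l IH]; intros z Hz Hs.
  - exists 1; split; [lia|]. apply inspan_zero; intros g; rewrite coeff_scale.
    rewrite (tree_no_cycle G T z Htree Hz); [ring|]. intros h Hh; destruct (Hs h Hh) as [?|[]]; auto.
  - destruct (classic (sar G T f)) as [Hf|Hf].
    + apply IH; auto. intros h Hh; destruct (Hs h Hh) as [?|[->|?]]; auto.
    + destruct (ef_exists G C L T f Hcov Hpres Hmax Hsp Hf) as [v [Hv [Hvc [Hvf Hvs]]]].
      set (k := coeff G v f). set (zf := coeff G z f).
      set (w := scale G k z ++ scale G (- zf) v).
      destruct (IH w) as [N [HN Hw]].
      { intros x; unfold w; rewrite boundary_app, !boundary_scale, Hz, Hvc; ring. }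
      { intros h Hh. unfold w in Hh; rewrite coeff_app, !coeff_scale in Hh.
        destruct (classic (h = f)) as [->|Hne]; [exfalso; apply Hh; unfold k, zf; ring|].
        destruct (classic (coeff G z h = 0)) as [E|E].
        - rewrite E in Hh. destruct (Hvs h) as [?|?]; [intro E'; apply Hh; rewrite E'; ring| auto | congruence].
        - destruct (Hs h E) as [?|[?|?]]; auto; congruence. }
      exists (N * k); split.
      * intro E; apply Z.mul_eq_0 in E; tauto.
      * apply (inspan_ext _ _ _ (scale G N w ++ scale G (N * zf) v)); [|apply inspan_app; [auto| apply inspan_scale; auto]].
        intros g. unfold w. rewrite coeff_app, !coeff_scale, coeff_app, !coeff_scale. ring.
Qed.

Definition sigma (i0 i : nat) : nat := if Nat.ltb i i0 then i else S i.

Lemma sum_to_S n F : sum_to (S n) F = sum_to n F + F n.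
Proof. reflexivity. Qed.

Lemma sum_to_skip n i0 F : (i0 < n)%nat -> sum_to n F = F i0 + sum_to (n - 1) (fun i => F (sigma i0 i)).
Proof.
  induction n as [|n IH]; intros H; [lia|].
  rewrite sum_to_S.
  destruct (Nat.eq_dec i0 n) as [->|Hne].
  - replace (S n - 1)%nat with n by lia. rewrite (sum_to_ext n (fun i => F (sigma n i)) F); [ring|].
    intros i Hi; unfold sigma; destruct (Nat.ltb_spec i n); [auto|lia].
  - rewrite IH by lia. replace (S n - 1)%nat with (S (n - 1)) by lia. rewrite sum_to_S.
    replace (sigma i0 (n-1)) with n by (unfold sigma; destruct (Nat.ltb_spec (n-1) i0); lia). ring.
Qed.

Lemma sum_to_minus n F G : sum_to n (fun i => F i - G i) = sum_to n F - sum_to n G.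
Proof. induction n; simpl; [lia|]. rewrite IHn; lia. Qed.

Lemma lin_dep m : forall n (Cm : nat -> nat -> Z), (m < n)%nat ->
  exists a : nat -> Z, (forall j, (j < m)%nat -> sum_to n (fun i => a i * Cm i j) = 0) /\
                       exists i, (i < n)%nat /\ a i <> 0.
Proof.
  induction m as [|m IH]; intros n Cm Hmn.
  - exists (fun _ => 1). split; [intros; lia| exists 0%nat; split; lia].
  - destruct (classic (exists i0, (i0 < n)%nat /\ Cm i0 m <> 0)) as [[i0 [Hi0 Hc0]]|Hall].
    + set (c0 := Cm i0 m).
      set (C' := fun i j => c0 * Cm (sigma i0 i) j - Cm (sigma i0 i) m * Cm i0 j).
      destruct (IH (n - 1)%nat C') as [b [Hb [i1 [Hi1 Hbi1]]]]; [lia|].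
      set (bsum := sum_to (n - 1) (fun i => b i * Cm (sigma i0 i) m)).
      set (a := fun k => if Nat.eqb k i0 then - bsum
                         else if Nat.ltb k i0 then c0 * b k else c0 * b (k - 1)%nat).
      assert (Ha0 : a i0 = - bsum) by (unfold a; rewrite Nat.eqb_refl; reflexivity).
      assert (Has : forall i, a (sigma i0 i) = c0 * b i).
      { intros i; unfold a, sigma. destruct (Nat.ltb_spec i i0).
        - destruct (Nat.eqb_spec i i0); [lia|]. destruct (Nat.ltb_spec i i0); [auto|lia].
        - destruct (Nat.eqb_spec (S i) i0); [lia|]. destruct (Nat.ltb_spec (S i) i0); [lia|].
          replace (S i - 1)%nat with i by lia; auto. }
      exists a. split.
      * intros j Hj. rewrite (sum_to_skip n i0) by auto. rewrite Ha0.
        rewrite (sum_to_ext (n-1) _ (fun i => c0 * b i * Cm (sigma i0 i) j)).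
        2:{ intros i _. rewrite Has; ring. }
        assert (E : sum_to (n - 1) (fun i => b i * C' i j) =
                    sum_to (n - 1) (fun i => c0 * b i * Cm (sigma i0 i) j) - bsum * Cm i0 j).
        { unfold bsum. rewrite Z.mul_comm, <- sum_to_scal, <- sum_to_minus.
          apply sum_to_ext; intros; unfold C'; ring. }
        assert (E2 : sum_to (n - 1) (fun i => b i * C' i j) = 0).
        { destruct (Nat.lt_ge_cases j m) as [Hjm|Hjm]; [apply Hb; auto|].
          replace j with m by lia. apply sum_to_zero; intros; unfold C', c0; ring. }
        lia.
      * exists (sigma i0 i1). split; [unfold sigma; destruct (Nat.ltb_spec i1 i0); lia|].
        rewrite Has. intro E; apply Z.mul_eq_0 in E; tauto.
    + destruct (IH n Cm) as [a [Ha Hnz]]; [lia|]. exists a; split; auto.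
      intros j Hj. destruct (Nat.lt_ge_cases j m) as [Hjm|Hjm]; [apply Ha; auto|].
      replace j with m by lia. apply sum_to_zero; intros i Hi.
      destruct (classic (Cm i m = 0)) as [E|E]; [rewrite E; ring| exfalso; apply Hall; eauto].
Qed.

Lemma list_of_fun (A : Type) n (h : {k : nat | (k < n)%nat} -> A) : forall m, (m <= n)%nat ->
  exists L : list A, length L = m /\ forall k (Hk : (k < n)%nat), (k < m)%nat -> In (h (exist _ k Hk)) L.
Proof.
  induction m as [|m IH]; intros Hm.
  - exists []; split; auto; intros; lia.
  - destruct (IH ltac:(lia)) as [L [HL HI]].
    assert (Hm' : (m < n)%nat) by lia.
    exists (L ++ [h (exist _ m Hm')]). split; [rewrite length_app; simpl; lia|].
    intros k Hk Hkm. apply in_or_app. destruct (Nat.lt_ge_cases k m) as [H|H]; [left; auto|].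
    right. left. f_equal. apply sub_eq; simpl; lia.
Qed.

Lemma card_or_list (A : Type) n :
  (exists h : {k : nat | (k < n)%nat} -> A, forall u v, h u = h v -> u = v) \/
  (exists L : list A, (length L < n)%nat /\ forall a, In a L).
Proof.
  induction n as [|n IH].
  - left. exists (fun u => False_rect _ (Nat.nlt_0_r _ (proj2_sig u))). intros [u Hu]; lia.
  - destruct IH as [[h Hh]|[L [HL HI]]]; [|right; exists L; split; auto; lia].
    destruct (classic (exists a, forall u, h u <> a)) as [[a Ha]|Hno].
    + left. exists (fun (u : {k : nat | (k < S n)%nat}) => match Compare_dec.lt_dec (proj1_sig u) n with
                             | left H => h (exist (fun k => (k < n)%nat) (proj1_sig u) H) | right _ => a end).
      intros [u Hu] [v Hv]; simpl.
      destruct (Compare_dec.lt_dec u n) as [H1|H1]; destruct (Compare_dec.lt_dec v n) as [H2|H2].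
      * intros E; apply Hh in E. injection E; intros; apply sub_eq; simpl; auto.
      * intros E; exfalso; apply (Ha _ E).
      * intros E; exfalso; apply (Ha _ (eq_sym E)).
      * intros _; apply sub_eq; simpl; lia.
    + right. destruct (list_of_fun A n h n (le_n n)) as [L [HL HI]].
      exists L; split; [lia|]. intros a. apply NNPP; intro Hn. apply Hno. exists a.
      intros [k Hk] E. apply Hn. rewrite <- E. apply HI; auto.
Qed.

Lemma hom_adj G x y : hom_exists G x y -> clos_refl_sym_trans _ (adjacent G) x y.
Proof.
  intros [p Hp]; revert x Hp; induction p as [|h p IH]; intros x; simpl.
  - intros ->; apply rst_refl.
  - intros [Hd Hp]. eapply rst_trans; [apply rst_step; exists h; eauto| apply IH; auto].
Qed.

Lemma conn_adj G x y : clos_refl_sym_trans _ (hom_exists G) x y -> clos_refl_sym_trans _ (adjacent G) x y.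
Proof.
  induction 1; [apply hom_adj; auto| apply rst_refl| apply rst_sym; auto| eapply rst_trans; eauto].
Qed.

Lemma betti0_one G b0 : connected G -> betti0 G b0 -> b0 = 1%nat.
Proof.
  intros [[x0] HG] [v [Hv1 Hv2]].
  destruct (Hv2 x0) as [i [Hi _]].
  destruct (Nat.lt_ge_cases 1 b0) as [H|H]; [|lia].
  exfalso. apply (Hv1 0%nat 1%nat); try lia. apply conn_adj, HG.
Qed.

Theorem mainTheorem16 (G : graph) (chi : Z) :
  connected G -> fair G -> euler_char_is G chi ->
  forall C : computad G, presents_thin_reflection G C ->
    card_ge (cells2 G C) (1 - chi).
Proof.
  intros Hconn [T [Hmt Htree]] [b0 [b1 [Hb0 [[[z [Hzc Hzi]] _] Hchi]]]] C Hpres.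
  pose proof (betti0_one G b0 Hconn Hb0) as E0. subst b0 chi.
  intros n Hn.
  destruct (card_or_list (cells2 G C) n) as [Hinj|[L [HL Hcov]]]; [exact Hinj|].
  exfalso.
  pose proof (spanning G T Hconn Hmt) as Hsp.
  assert (Hred : forall i, exists Na : Z * (nat -> Z), (i < b1)%nat -> fst Na <> 0 /\
            forall f, fst Na * coeff G (z i) f =
                      sum_to (length L) (fun j => snd Na j * coeff G (Dj G C L j) f)).
  { intros i. destruct (Nat.lt_ge_cases i b1) as [Hi|Hi].
    - destruct (reduce G C L T Hcov Hpres Hmt Htree Hsp (map fst (z i)) (z i) (Hzc i Hi))
        as [N [HN [a Ha]]].
      + intros h Hh. right. apply coeff_nz_in; auto.
      + exists (N, a). intros _. split; auto. intros f; rewrite <- Ha, coeff_scale; reflexivity.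
    - exists (0, fun _ => 0); intros; lia. }
  set (Na := fun i => proj1_sig (constructive_indefinite_description _ (Hred i))).
  assert (HNa : forall i, (i < b1)%nat -> fst (Na i) <> 0 /\
            forall f, fst (Na i) * coeff G (z i) f =
                      sum_to (length L) (fun j => snd (Na i) j * coeff G (Dj G C L j) f)).
  { intro i. exact (proj2_sig (constructive_indefinite_description _ (Hred i))). }
  destruct (lin_dep (length L) b1 (fun i j => snd (Na i) j)) as [a [Ha [i1 [Hi1 Hai1]]]]; [lia|].
  assert (Hz0 : forall f, sum_to b1 (fun i => (a i * fst (Na i)) * coeff G (z i) f) = 0).
  { intros f.
    rewrite (sum_to_ext b1 _ (fun i => sum_to (length L)
               (fun j => a i * snd (Na i) j * coeff G (Dj G C L j) f))).
    2:{ intros i Hi. rewrite <- Z.mul_assoc, (proj2 (HNa i Hi)), <- sum_to_scal.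
        apply sum_to_ext; intros; ring. }
    rewrite sum_to_swap. apply sum_to_zero; intros j Hj.
    rewrite (sum_to_ext b1 _ (fun i => coeff G (Dj G C L j) f * (a i * snd (Na i) j))).
    2:{ intros; ring. }
    rewrite sum_to_scal, Ha; auto; ring. }
  pose proof (Hzi _ Hz0 i1 Hi1) as E.
  apply Z.mul_eq_0 in E. destruct E as [E|E]; [auto| apply (proj1 (HNa i1 Hi1)); auto].
Qed.
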